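(* The vector space $M(\beta)/(Z_1,\dots,Z_d)M(\beta)$ is finite dimensional.
   Context: $N\cong\mathbb Z^d$ lattice, $M=\mathrm{Hom}(N,\mathbb Z)$ with basis $m_1,\dots,m_d$; $\mathcal A=\{v_1,\dots,v_n\}\subset N$ generating $N$ with a homomorphism $\mathrm h:N\to\mathbb Z$, $\mathrm h(v_j)=1$; $K=\mathbb R_{\ge0}\mathrm{Conv}(\mathcal A)$; $\Sigma$ the simplicial fan supported on $K$ from a regular triangulation of $\mathrm{Conv}(\mathcal A)$ with vertices in $\mathcal A$; $\beta\in N$. $\mathbb C[K,\Sigma]$: basis $x^w$ ($w\in K\cap N$), $x^{w_1}x^{w_2}=x^{w_1+w_2}$ if a cone of $\Sigma$ contains both, else $0$. $Z_i=\sum_{j:\mathbb R_{\ge0}v_j\in\Sigma}\langle m_i,v_j\rangle x^{v_j}$. $\mathrm{Box}(\Sigma)$: $v\in N$, $v=\sum q_jv_j$, $0\le q_j<1$, $q_j=0$ unless $v_j$ spans a ray of one fixed maximal cone; $\sigma(v)$ smallest cone containing $v$. $R$: subring generated by $x^{v_j}$, $\mathbb R_{\ge0}v_j\in\Sigma$. $M(\beta)$: $R$-submodule generated by $x^v\prod_{j:r_j<0,\ \mathbb R_{\ge0}v_j\in\Sigma,\ \mathbb R_{\ge0}v_j\not\prec\sigma(v)}x^{v_j}$ over all $v\in\mathrm{Box}(\Sigma)$, $r\in\mathbb Z^n$ with $v+\sum r_jv_j=\beta$, $r_j\ge0$ whenever $\mathbb R_{\ge0}v_j\notin\Sigma$.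 *)

(* Defs.v *)
From HB Require Import structures.
From mathcomp Require Import all_boot all_order all_algebra.
From mathcomp Require Import boolp reals complex.
Set Implicit Arguments. Unset Strict Implicit. Unset Printing Implicit Defensive.
Import Order.TTheory GRing.Theory Num.Theory.
Local Open Scope ring_scope.

(* Lattice N = Z^d as 'rV[int]_d; the dual basis m_1..m_d of M is the
   coordinate basis, so <m_i, w> = w 0 i.  A = {v_0, ..., v_(n-1)}.
   The triangulation is given by its set T of maximal simplices (index sets). *)
Section Fan.
Variables (d n : nat) (v : 'I_n -> 'rV[int]_d) (T : {set {set 'I_n}}).

Definition ratv (w : 'rV[int]_d) : 'rV[rat]_d := map_mx (fun z : int => z%:~R) w.

Definition dotQ (p x : 'rV[rat]_d) : rat := \sum_(i < d) p 0 i * x 0 i.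

Definition in_coneQ (F : {set 'I_n}) (x : 'rV[rat]_d) : Prop :=
  exists c : 'I_n -> rat, (forall j, 0 <= c j) /\ (forall j, j \notin F -> c j = 0)
    /\ x = \sum_j c j *: ratv (v j).

Definition in_cone (F : {set 'I_n}) (w : 'rV[int]_d) : Prop := in_coneQ F (ratv w).

Definition in_K (w : 'rV[int]_d) : Prop := in_cone setT w.

(* cones of Sigma are the cones over faces F of maximal simplices S in T *)
Definition is_cone (F : {set 'I_n}) : bool := [exists S in T, F \subset S].

Definition is_ray (j : 'I_n) : bool := [exists S in T, j \in S].

Definition common_cone (w1 w2 : 'rV[int]_d) : Prop :=
  exists S, S \in T /\ in_cone S w1 /\ in_cone S w2.

Definition smallest_cone (F : {set 'I_n}) (w : 'rV[int]_d) : Prop :=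
  is_cone F /\ in_cone F w /\
  forall G, is_cone G -> in_cone G w -> forall x, in_coneQ F x -> in_coneQ G x.

Definition ray_face (j : 'I_n) (w : 'rV[int]_d) : Prop :=
  exists F, smallest_cone F w /\ j \in F.

Definition in_box (w : 'rV[int]_d) : Prop :=
  exists S, S \in T /\ exists q : 'I_n -> rat,
    (forall j, 0 <= q j < 1) /\ (forall j, j \notin S -> q j = 0)
    /\ ratv w = \sum_j q j *: ratv (v j).

(* Hypotheses on A: a set (v injective) generating N, lying on h = 1 *)
Definition good_config : Prop :=
  injective v /\
  (forall w : 'rV[int]_d, exists r : 'I_n -> int, w = \sum_j r j *: v j) /\
  (exists hh : 'rV[int]_d, forall j, \sum_(i < d) hh 0 i * v j 0 i = 1).

Definition regular_triangulation : Prop :=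
  (forall S, S \in T -> #|S| = d /\
     forall c : 'I_n -> rat, (forall j, j \notin S -> c j = 0) ->
       \sum_j c j *: ratv (v j) = 0 -> forall j, c j = 0) /\
  (* they cover Conv(A), i.e. the cones cover K *)
  (forall x, in_coneQ setT x -> exists S, S \in T /\ in_coneQ S x) /\
  (forall S S', S \in T -> S' \in T -> forall x,
     in_coneQ S x -> in_coneQ S' x -> in_coneQ (S :&: S') x) /\
  (* regularity: induced by a height function omega *)
  (exists omega : 'I_n -> rat, forall S, S \in T -> exists psi : 'rV[rat]_d,
     forall j, (j \in S -> dotQ psi (ratv (v j)) = omega j) /\
               (j \notin S -> dotQ psi (ratv (v j)) < omega j)).

(* The ring C[K,Sigma] over a coefficient field C: elements are represented
   by finite formal combinations (lists of (coefficient, exponent)); two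
   representations denote the same element iff their coefficient functions agree. *)
Variable C : fieldType.

Definition elt := seq (C * 'rV[int]_d).

Definition coef (f : elt) (w : 'rV[int]_d) : C := \sum_(p <- f | p.2 == w) p.1.

Definition mono (w : 'rV[int]_d) : elt := [:: (1, w)].

Definition eadd (f g : elt) : elt := f ++ g.

Definition escale (c : C) (f : elt) : elt := [seq (c * p.1, p.2) | p <- f].

Definition emul (f g : elt) : elt :=
  [seq (p.1 * q.1, p.2 + q.2) | p <- f,
     q <- [seq q <- g | `[< common_cone p.2 q.2 >]]].

Definition eeq (f g : elt) : Prop := forall w, coef f w = coef g w.

Inductive inR : elt -> Prop :=
| inR_const (c : C) : inR [:: (c, 0)]
| inR_ray j : is_ray j -> inR (mono (v j))
| inR_add f g : inR f -> inR g -> inR (eadd f g)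
| inR_mul f g : inR f -> inR g -> inR (emul f g)
| inR_ext f g : inR f -> eeq f g -> inR g.

Definition gen (beta : 'rV[int]_d) (f : elt) : Prop :=
  exists (w : 'rV[int]_d) (r : 'I_n -> int),
    in_box w /\ w + \sum_j r j *: v j = beta /\
    (forall j, ~~ is_ray j -> 0 <= r j) /\
    f = foldr emul (mono w)
          [seq mono (v j) | j <- enum 'I_n &
             (r j < 0) && is_ray j && ~~ `[< ray_face j w >]].

Inductive inM (beta : 'rV[int]_d) : elt -> Prop :=
| inM_zero : inM beta [::]
| inM_gen f : gen beta f -> inM beta f
| inM_add f g : inM beta f -> inM beta g -> inM beta (eadd f g)
| inM_mul r f : inR r -> inM beta f -> inM beta (emul r f)
| inM_ext f g : inM beta f -> eeq f g -> inM beta g.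

Definition Zi (i : 'I_d) : elt :=
  [seq ((v j 0 i)%:~R, v j) | j <- enum 'I_n & is_ray j].

(* M(beta)/(Z_1,...,Z_d)M(beta) is finite dimensional over C: finitely many
   elements of M(beta) span it modulo (Z_1,...,Z_d)M(beta). *)
Definition quotient_finite_dim (beta : 'rV[int]_d) : Prop :=
  exists (k : nat) (b : 'I_k -> elt),
    (forall t, inM beta (b t)) /\
    forall f, inM beta f ->
      exists (c : 'I_k -> C) (ms : 'I_d -> elt),
        (forall i, inM beta (ms i)) /\
        eeq f (flatten ([seq escale (c t) (b t) | t <- enum 'I_k] ++
                        [seq emul (Zi i) (ms i) | i <- enum 'I_d])).

End Fan.

(* Main.v *)
Require Import Defs.
From HB Require Import structures.
From mathcomp Require Import all_boot all_order all_algebra.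
From mathcomp Require Import boolp reals complex.
From mathcomp Require Import zify.
Import Order.TTheory GRing.Theory Num.Theory.
Local Open Scope ring_scope.
Set Implicit Arguments. Unset Strict Implicit. Unset Printing Implicit Defensive.

Section Alg.
Variables (d n : nat) (v : 'I_n -> 'rV[int]_d) (T : {set {set 'I_n}}) (C : numFieldType).

Local Notation elt := (elt d C).
Local Notation coef := (@coef d C).
Local Notation emul := (@emul d n v T C).
Local Notation mono := (@mono d C).
Local Notation escale := (@escale d C).
Local Notation eeq := (@eeq d C).
Local Notation cc := (fun a b => `[< common_cone v T a b >]).

Lemma ecoefE (f : elt) w : coef f w = \sum_(p <- f) (if p.2 == w then p.1 else 0).
Proof. by rewrite /coef big_mkcond. Qed.

Lemma coef_cat (f g : elt) w : coef (f ++ g) w = coef f w + coef g w.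
Proof. by rewrite /coef big_cat. Qed.

Lemma coef_nil w : coef [::] w = 0.
Proof. by rewrite /coef big_nil. Qed.

Lemma coef_flatten (L : seq elt) w : coef (flatten L) w = \sum_(l <- L) coef l w.
Proof. by rewrite /coef big_flatten. Qed.

Lemma coef_escale c (f : elt) w : coef (escale c f) w = c * coef f w.
Proof. by rewrite !ecoefE big_map mulr_sumr; apply: eq_bigr => p _; case: ifP; rewrite ?mulr0. Qed.

Lemma coef_mono u w : coef (mono u) w = (u == w)%:R.
Proof. by rewrite ecoefE big_cons big_nil addr0 /=; case: eqP. Qed.

Lemma big_emul (F : C * 'rV[int]_d -> C) (f g : elt) :
  \sum_(e <- emul f g) F e =
  \sum_(p <- f) \sum_(q <- g) (if cc p.2 q.2 then F (p.1 * q.1, p.2 + q.2) else 0).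
Proof.
rewrite /Defs.emul; elim: f => [|p f IH] /=; first by rewrite !big_nil.
rewrite big_cat big_cons IH; congr (_ + _).
by rewrite big_map big_filter big_mkcond.
Qed.

Lemma coef_emul (f g : elt) w : coef (emul f g) w =
  \sum_(p <- f) \sum_(q <- g) (if cc p.2 q.2 && (p.2 + q.2 == w) then p.1 * q.1 else 0).
Proof.
rewrite ecoefE big_emul; apply: eq_bigr => p _; apply: eq_bigr => q _.
by case: ifP => //=; case: ifP.
Qed.

Lemma coef_emulr (f g : elt) w : coef (emul f g) w =
  \sum_(p <- f) p.1 * (if cc p.2 (w - p.2) then coef g (w - p.2) else 0).
Proof.
rewrite coef_emul; apply: eq_bigr => p _.
case: ifP => H.
  rewrite ecoefE mulr_sumr; apply: eq_bigr => q _.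
  have -> : (p.2 + q.2 == w) = (q.2 == w - p.2).
    by apply/eqP/eqP => [<-|->]; [rewrite (addrC p.2) addrK | rewrite addrC subrK].
  by case: eqP => [->|]; rewrite ?H ?andbF ?andbT ?mulr0.
rewrite mulr0; apply: big1 => q _.
case: eqP => [E|]; rewrite ?andbF //.
have -> : q.2 = w - p.2 by rewrite -E (addrC p.2) addrK.
by rewrite H.
Qed.

Lemma cc_sym a b : cc a b = cc b a.
Proof.
apply/asboolP/asboolP => -[S [HS [H1 H2]]]; by exists S.
Qed.

Lemma emulC (f g : elt) : eeq (emul f g) (emul g f).
Proof.
move=> w; rewrite !coef_emul exchange_big; apply: eq_bigr => q _; apply: eq_bigr => p _.
by rewrite cc_sym addrC mulrC.
Qed.

Lemma coef_emull (f g : elt) w : coef (emul f g) w =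
  \sum_(q <- g) q.1 * (if cc q.2 (w - q.2) then coef f (w - q.2) else 0).
Proof. by rewrite emulC coef_emulr. Qed.


Lemma emul_eeqr (f g g' : elt) : eeq g g' -> eeq (emul f g) (emul f g').
Proof. by move=> E w; rewrite !coef_emulr; apply: eq_bigr => p _; rewrite E. Qed.

Lemma emul_eeql (f f' g : elt) : eeq f f' -> eeq (emul f g) (emul f' g).
Proof. by move=> E w; rewrite !coef_emull; apply: eq_bigr => p _; rewrite E. Qed.

Lemma coef_emul_catr (f g h : elt) w :
  coef (emul f (g ++ h)) w = coef (emul f g) w + coef (emul f h) w.
Proof.
rewrite !coef_emulr -big_split; apply: eq_bigr => p _.
by case: ifP => _; rewrite /= ?coef_cat ?mulrDr ?mulr0 ?addr0.
Qed.

Lemma coef_emul_catl (f g h : elt) w :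
  coef (emul (f ++ g) h) w = coef (emul f h) w + coef (emul g h) w.
Proof.
rewrite !coef_emull -big_split; apply: eq_bigr => p _.
by case: ifP => _; rewrite /= ?coef_cat ?mulrDr ?mulr0 ?addr0.
Qed.

Lemma coef_emul_scaler (f g : elt) c w :
  coef (emul f (escale c g)) w = c * coef (emul f g) w.
Proof.
rewrite !coef_emulr mulr_sumr; apply: eq_bigr => p _.
case: ifP; rewrite ?coef_escale ?mulr0 // => _.
by rewrite mulrCA.
Qed.

Lemma coef_emul_scalel (f g : elt) c w :
  coef (emul (escale c f) g) w = c * coef (emul f g) w.
Proof. by rewrite emulC coef_emul_scaler emulC. Qed.

Lemma coef_emul_nilr (f : elt) w : coef (emul f [::]) w = 0.
Proof. by rewrite coef_emul big1 // => p _; rewrite big_nil. Qed.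

Lemma coef_emul_nill (f : elt) w : coef (emul [::] f) w = 0.
Proof. by rewrite coef_emul big_nil. Qed.

Lemma coef_emul_flattenr (f : elt) (L : seq elt) w :
  coef (emul f (flatten L)) w = \sum_(l <- L) coef (emul f l) w.
Proof.
elim: L => [|l L IH] /=; first by rewrite big_nil coef_emul_nilr.
by rewrite coef_emul_catr IH big_cons.
Qed.

Lemma coef_emul_flattenl (f : elt) (L : seq elt) w :
  coef (emul (flatten L) f) w = \sum_(l <- L) coef (emul l f) w.
Proof.
rewrite emulC coef_emul_flattenr; apply: eq_bigr => l _; exact: emulC.
Qed.


Lemma coef_escale_eeq c (f g : elt) : eeq f g -> eeq (escale c f) (escale c g).
Proof. by move=> E w; rewrite !coef_escale E. Qed.

Hypothesis Hcc : forall a b c, cc a b && cc (a + b) c = cc b c && cc a (b + c).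

Lemma emulA (f g h : elt) : eeq (emul (emul f g) h) (emul f (emul g h)).
Proof.
move=> w; rewrite [LHS]coef_emul big_emul [RHS]coef_emul; apply: eq_bigr => p _.
rewrite big_emul; apply: eq_bigr => q _.
case E1: (cc p.2 q.2).
  apply: eq_bigr => r _ /=.
  case E2: (cc q.2 r.2) => /=; have := Hcc p.2 q.2 r.2; rewrite E1 E2 /= ?andbT ?andbF.
  - by move=> ->; rewrite addrA mulrA.
  - by move=> ->.
apply/esym/big1 => r _ /=.
case E2: (cc q.2 r.2) => //; have := Hcc p.2 q.2 r.2; rewrite E1 E2 /= ?andbT ?andbF.
by move=> <-.
Qed.

Lemma emul_swap (u u' h : elt) : eeq (emul u (emul u' h)) (emul u' (emul u h)).
Proof.
move=> w; rewrite -emulA (emul_eeql _ (emulC u u')) emulA //.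
Qed.

End Alg.

Lemma esum_enum (R : nmodType) (I : finType) (F : I -> R) : \sum_(i <- enum I) F i = \sum_i F i.
Proof. by rewrite big_enum. Qed.
Lemma esum_enum_cond (R : nmodType) (I : finType) P (F : I -> R) : \sum_(i <- enum I | P i) F i = \sum_(i | P i) F i.
Proof. by rewrite big_enum_cond. Qed.

Lemma coef_eadd (d : nat) (C : fieldType) (f g : Defs.elt d C) w :
  Defs.coef (eadd f g) w = Defs.coef f w + Defs.coef g w.
Proof. by rewrite /coef big_cat. Qed.

Section Geom.
Variables (d n : nat) (v : 'I_n -> 'rV[int]_d) (T : {set {set 'I_n}}).
Local Notation ratv := (@ratv d).
Local Notation in_cone := (in_cone v).
Local Notation in_coneQ := (in_coneQ v).

Hypothesis Hind : forall S, S \in T ->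
     forall c : 'I_n -> rat, (forall j, j \notin S -> c j = 0) ->
       \sum_j c j *: ratv (v j) = 0 -> forall j, c j = 0.
Hypothesis Hint : forall S S', S \in T -> S' \in T -> forall x,
     in_coneQ S x -> in_coneQ S' x -> in_coneQ (S :&: S') x.

Lemma ratvD a b : ratv (a + b) = ratv a + ratv b.
Proof. by apply/matrixP => i j; rewrite !mxE intrD. Qed.

Lemma ratv0 : ratv 0 = 0.
Proof. by apply/matrixP => i j; rewrite !mxE. Qed.

Lemma in_cone0 (S : {set 'I_n}) : in_cone S 0.
Proof.
exists (fun _ => 0); split => // ; split => //.
by rewrite ratv0 big1 // => j _; rewrite scale0r.
Qed.

Lemma in_cone_add (S : {set 'I_n}) a b : in_cone S a -> in_cone S b -> in_cone S (a + b).
Proof.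
move=> [ca [ca0 [caS Ea]]] [cb [cb0 [cbS Eb]]].
exists (fun j => ca j + cb j); split; first by move=> j; rewrite addr_ge0.
split; first by move=> j jS; rewrite caS // cbS // addr0.
by rewrite ratvD Ea Eb -big_split /=; apply: eq_bigr => j _; rewrite scalerDl.
Qed.

Lemma in_cone_v (S : {set 'I_n}) k : k \in S -> in_cone S (v k).
Proof.
move=> kS; exists (fun j => (j == k)%:R); split; first by move=> j; rewrite ler0n.
split; first by move=> j jS; case: eqP => // E; rewrite E kS in jS.
rewrite (bigD1 k) //= eqxx scale1r big1 ?addr0 // => j /negPf ->.
by rewrite scale0r.
Qed.

Lemma cone_split (S1 S0 : {set 'I_n}) a b : S1 \in T -> S0 \in T ->
  in_cone S1 a -> in_cone S1 b -> in_cone S0 (a + b) -> in_cone S0 a.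
Proof.
move=> HS1 HS0 Ha Hb Hab.
have Hab1 := in_cone_add Ha Hb.
move: Ha Hb => [ca [ca0 [caS Ea]]] [cb [cb0 [cbS Eb]]].
have [e [e0 [eS Ee]]] := Hint HS1 HS0 Hab1 Hab.
have H := Hind HS1 (c := fun j => ca j + cb j - e j).
have {}H : forall j, ca j + cb j - e j = 0.
  apply: H.
    move=> j jS; rewrite caS // cbS // eS ?addr0 ?subrr //.
    by rewrite in_setI negb_and jS.
  rewrite (eq_bigr (fun j => ca j *: ratv (v j) + cb j *: ratv (v j) - e j *: ratv (v j))); last first.
    by move=> j _; rewrite scalerBl scalerDl.
  by rewrite sumrB big_split /= -Ea -Eb -Ee ratvD subrr.
exists ca; split => //; split => // j jS0.
have : e j = 0 by apply: eS; rewrite in_setI negb_and jS0 orbT.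
move/eqP: (H j); rewrite subr_eq0 => /eqP Hs Hz.
apply/eqP; rewrite eq_le ca0 andbT.
by rewrite -(lerD2r (cb j)) add0r Hs Hz cb0.
Qed.

Lemma cc_assoc a b c :
  `[< common_cone v T a b >] && `[< common_cone v T (a + b) c >] =
  `[< common_cone v T b c >] && `[< common_cone v T a (b + c) >].
Proof.
apply/andP/andP => -[/asboolP [S1 [H1 [Ha Hb]]] /asboolP [S2 [H2 [Hab Hc]]]].
  have Ha2 := cone_split H1 H2 Ha Hb Hab.
  have Hb2 : in_cone S2 b by apply: (cone_split H1 H2 Hb Ha); rewrite addrC.
  split; apply/asboolP; exists S2; split => //; split => //.
  exact: in_cone_add.
have Hb2 := cone_split H1 H2 Ha Hb Hc.
have Hc2 : in_cone S2 c by apply: (cone_split H1 H2 Hb Ha); rewrite addrC.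
split; apply/asboolP; exists S2; split => //; split => //.
exact: in_cone_add.
Qed.

Lemma ray_notin (S S' : {set 'I_n}) k : S \in T -> S' \in T -> k \in S' -> k \notin S -> ~ in_cone S (v k).
Proof.
move=> HS HS' kS' kS Hk.
have [e [e0 [eS Ee]]] := Hint HS HS' Hk (in_cone_v kS').
have H := Hind HS' (c := fun j => e j - (j == k)%:R).
have {}H : forall j, e j - (j == k)%:R = 0.
  apply: H.
    move=> j jS; rewrite eS; last by rewrite in_setI negb_and jS orbT.
    by case: eqP => // E; rewrite E kS' in jS.
  rewrite (eq_bigr (fun j => e j *: ratv (v j) - (j == k)%:R *: ratv (v j))); last first.
    by move=> j _; rewrite scalerBl.
  rewrite sumrB -Ee (bigD1 k) //= eqxx scale1r big1 ?addr0 ?subrr // => j /negPf ->.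
  by rewrite scale0r.
move: (H k); rewrite eqxx eS ?sub0r; last by rewrite in_setI negb_and kS.
by move/eqP; rewrite oppr_eq0 oner_eq0.
Qed.

End Geom.

Section Lin.
Variables (d n : nat) (v : 'I_n -> 'rV[int]_d).
Local Notation ratv := (@ratv d).

Lemma dual_exists (S : {set 'I_n}) (j : 'I_n) :
  #|S| = d ->
  (forall c : 'I_n -> rat, (forall j, j \notin S -> c j = 0) ->
       \sum_j c j *: ratv (v j) = 0 -> forall j, c j = 0) ->
  exists mu : 'I_d -> rat, forall k, k \in S ->
    \sum_i mu i * (v k 0 i)%:~R = (k == j)%:R.
Proof.
move=> Hc Hind.
case: (boolP (j \in S)) => jS; last first.
  exists (fun _ => 0) => k kS; rewrite big1 => [|i _]; last by rewrite mul0r.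
  by case: eqP => // E; rewrite -E kS in jS.
pose g (r : 'I_d) : 'I_n := enum_val (cast_ord (esym Hc) r).
have gS r : g r \in S by exact: enum_valP.
have ginj : injective g by move=> r1 r2 /enum_val_inj /cast_ord_inj.
have gsurj k : k \in S -> exists r, g r = k.
  move=> kS; exists (cast_ord Hc (enum_rank_in kS k)).
  by rewrite /g cast_ordK enum_rankK_in.
have indep (x : 'I_d -> rat) : \sum_r x r *: ratv (v (g r)) = 0 -> forall r, x r = 0.
  move=> Hx r.
  pose c k := \sum_r' (g r' == k)%:R * x r'.
  have cg r' : c (g r') = x r'.
    rewrite /c (bigD1 r') //= eqxx mul1r big1 ?addr0 // => r'' /negPf Hr.
    by rewrite (inj_eq ginj) Hr mul0r.
  rewrite -cg; apply: Hind.
    move=> k kS; rewrite /c big1 // => r' _.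
    by case: eqP => [E|]; [rewrite -E gS in kS | rewrite mul0r].
  transitivity (\sum_r x r *: ratv (v (g r))); last exact: Hx.
  rewrite /c; under eq_bigr do rewrite scaler_suml.
  rewrite exchange_big /=; apply: eq_bigr => r' _.
  rewrite (bigD1 (g r')) //= eqxx mul1r big1 ?addr0 // => k /negPf Hk.
  by rewrite eq_sym Hk mul0r scale0r.
pose A : 'M[rat]_d := \matrix_(r, i) (v (g r) 0 i)%:~R.
have Au : A \in unitmx.
  rewrite unitmxE unitfE; apply/negP => /det0P [x x0 xA].
  move/negP: x0; apply; apply/eqP/matrixP => i0 r; rewrite mxE.
  have -> : i0 = 0 by rewrite ord1.
  apply: indep r; apply/matrixP => i1 i; rewrite summxE [RHS]mxE.
  move/matrixP: xA => /(_ 0 i); rewrite !mxE => Hxi.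
  transitivity (\sum_j0 x 0 j0 * A j0 i); last exact: Hxi.
  rewrite ord1; apply: eq_bigr => r' _; rewrite !mxE //.
have [r0 gr0] := gsurj j jS.
pose mc := invmx A *m delta_mx r0 (0 : 'I_1).
exists (fun i => mc i 0) => k kS.
have [r <-] := gsurj k kS.
have E : A *m mc = delta_mx r0 0 by rewrite /mc mulmxA mulmxV // mul1mx.
move/matrixP: E => /(_ r 0); rewrite !mxE => E.
rewrite -gr0 (inj_eq ginj) -(andbT (r == r0)) -E.
by apply: eq_bigr => i _; rewrite !mxE mulrC.
Qed.

End Lin.

Section Mod.
Variables (d n : nat) (v : 'I_n -> 'rV[int]_d) (T : {set {set 'I_n}}) (C : numFieldType).
Variable beta : 'rV[int]_d.

Local Notation elt := (elt d C).
Local Notation coef := (@coef d C).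
Local Notation emul := (@Defs.emul d n v T C).
Local Notation mono := (@mono d C).
Local Notation escale := (@escale d C).
Local Notation eeq := (@eeq d C).
Local Notation cc := (fun a b => `[< common_cone v T a b >]).
Local Notation inR := (@inR d n v T C).
Local Notation inM := (@inM d n v T C beta).
Local Notation Zi := (@Zi d n v T C).
Local Notation ratv := (@ratv d).
Local Notation in_cone := (in_cone v).
Local Notation in_coneQ := (in_coneQ v).

Hypothesis Hind : forall S, S \in T ->
     forall c : 'I_n -> rat, (forall j, j \notin S -> c j = 0) ->
       \sum_j c j *: ratv (v j) = 0 -> forall j, c j = 0.
Hypothesis Hint : forall S S', S \in T -> S' \in T -> forall x,
     in_coneQ S x -> in_coneQ S' x -> in_coneQ (S :&: S') x.

Definition supp_ok (f : elt) := forall p, p \in f -> exists S, S \in T /\ in_cone S p.2.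

Lemma mem_emul (f g : elt) p : p \in emul f g -> exists a b, [/\ a \in f, b \in g,
  cc a.2 b.2 & p = (a.1 * b.1, a.2 + b.2)].
Proof.
rewrite /Defs.emul => /flattenP [s /mapP [a af ->]] /mapP [b].
rewrite mem_filter => /andP [Hc bg] ->.
by exists a, b.
Qed.

Lemma supp_emul (f g : elt) : supp_ok (emul f g).
Proof.
move=> p /mem_emul [a [b [_ _ /asboolP [S [HS [Ha Hb]]] ->]]].
by exists S; split => //; apply: in_cone_add.
Qed.

Lemma supp_gen f : gen v T beta f -> supp_ok f.
Proof.
move=> [w [r [Hb [_ [_ ->]]]]].
case: [seq _ | _ <- _ & _] => [|x L] /=; last exact: supp_emul.
move=> p; rewrite inE => /eqP -> /=.
move: Hb => [S [HS [q [q01 [qS Eq]]]]].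
exists S; split => //; exists q; split => //.
by move=> j; case/andP: (q01 j).
Qed.

Lemma emul_const c (f : elt) : supp_ok f -> eeq (emul [:: (c, 0)] f) (escale c f).
Proof.
move=> Hf w; rewrite coef_emulr coef_escale big_cons big_nil addr0 /= subr0.
case: ifP => // /negP Hw; rewrite ecoefE big1_seq ?mulr0 // => p /andP [_ pf].
case: eqP => // E; exfalso; apply: Hw; apply/asboolP.
have [S [HS HpS]] := Hf p pf.
by exists S; split => //; split; [exact: in_cone0 | rewrite -E].
Qed.

Lemma inM_escale c f : inM f -> inM (escale c f).
Proof.
elim => {f}.
- exact: inM_zero.
- move=> f Hf; apply: inM_ext (inM_mul (inR_const v T c) (inM_gen Hf)) _.
  exact: emul_const (supp_gen Hf).
- by move=> f g _ Hf _ Hg; rewrite /eadd /Defs.escale map_cat; apply: inM_add.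
- move=> r f Hr _ Hf; apply: inM_ext (inM_mul Hr Hf) _.
  by move=> w; rewrite coef_emul_scaler coef_escale.
- by move=> f g _ Hf E; apply: inM_ext Hf _; apply: coef_escale_eeq.
Qed.

Lemma inR_single c k : is_ray T k -> inR [:: (c, v k)].
Proof.
move=> Hk; apply: inR_ext (inR_mul (inR_const v T c) (inR_ray v C Hk)) _.
have -> : [:: (c, v k)] = escale c (mono (v k)) by rewrite /Defs.escale /= mulr1.
apply: emul_const => p; rewrite inE => /eqP -> /=.
move/existsP: Hk => [S /andP [HS kS]].
by exists S; split => //; apply: in_cone_v.
Qed.

Lemma inR_list (L : elt) : (forall p, p \in L -> inR [:: p]) -> inR L.
Proof.
elim: L => [|p L IH] H.
  apply: (inR_ext (inR_const v T 0)) => w.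
  by rewrite coef_nil ecoefE big_cons big_nil /=; case: ifP; rewrite addr0.
apply: (@inR_add _ _ _ _ _ [:: p] L); first by apply: H; rewrite inE eqxx.
by apply: IH => q qL; apply: H; rewrite inE qL orbT.
Qed.

Lemma coef_Zi i w : coef (Zi i) w = \sum_(k | is_ray T k) (if v k == w then (v k 0 i)%:~R else 0).
Proof.
rewrite ecoefE /Zi big_map big_filter big_enum_cond /=.
by apply: eq_bigr.
Qed.


Definition zsum (ms : 'I_d -> elt) : elt := flatten [seq emul (Zi i) (ms i) | i <- enum 'I_d].

Lemma coef_zsum ms w : coef (zsum ms) w = \sum_i coef (emul (Zi i) (ms i)) w.
Proof. by rewrite coef_flatten big_map esum_enum. Qed.

Definition Pl (S : {set 'I_n}) (j : 'I_n) (mu : 'I_d -> C) : elt :=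
  [seq (((k == j)%:R - \sum_i mu i * (v k 0 i)%:~R), v k) | k <- enum 'I_n & is_ray T k && (k \notin S)].

Definition Lz (mu : 'I_d -> C) : elt := flatten [seq escale (mu i) (Zi i) | i <- enum 'I_d].

Lemma coef_Pl S j mu w : coef (Pl S j mu) w = \sum_(k | is_ray T k)
  (if k \notin S then (if v k == w then (k == j)%:R - \sum_i mu i * (v k 0 i)%:~R else 0) else 0).
Proof.
rewrite ecoefE /Pl big_map big_filter esum_enum_cond big_mkcondr.
by apply: eq_bigr.
Qed.

Lemma coef_Lz mu w : coef (Lz mu) w = \sum_i mu i * coef (Zi i) w.
Proof.
rewrite coef_flatten big_map esum_enum; apply: eq_bigr => i _; exact: coef_escale.
Qed.

Lemma xj_split j (S : {set 'I_n}) mu : is_ray T j ->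
  (forall k, k \in S -> \sum_i mu i * (v k 0 i)%:~R = (k == j)%:R) ->
  eeq (mono (v j)) (Lz mu ++ Pl S j mu).
Proof.
move=> Hj Hmu w; rewrite coef_cat coef_Lz coef_Pl coef_mono.
under eq_bigr do rewrite coef_Zi big_distrr.
rewrite exchange_big -big_split /=.
rewrite (bigD1 j) //= [X in _ + X]big1 ?addr0; last first.
  move=> k /andP [Hk kj].
  case: eqP => _; last first.
    by rewrite big1 ?add0r; [case: ifP | move=> i _; rewrite mulr0].
  rewrite (negPf kj); case: (boolP (k \in S)) => kS /=.
    by rewrite addr0 (Hmu _ kS) (negPf kj).
  by rewrite sub0r addrN.
have [E|NE] := eqVneq (v j) w; last first.
    rewrite big1 ?add0r; first by case: ifP.
    by move=> i _; rewrite mulr0.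
  subst w; rewrite eqxx; case: (boolP (j \in S)) => jS /=.
    by rewrite addr0 (Hmu _ jS) eqxx.
  by rewrite addrC subrK.
Qed.


Hypothesis Hcard : forall S, S \in T -> #|S| = d.

Let Hcc := cc_assoc Hind Hint.

Lemma dual_C (S : {set 'I_n}) j : S \in T ->
  exists mu : 'I_d -> C, forall k, k \in S -> \sum_i mu i * (v k 0 i)%:~R = (k == j)%:R.
Proof.
move=> HS; have [mu Hmu] := dual_exists j (Hcard HS) (Hind HS).
exists (fun i => ratr (mu i)) => k kS.
have := congr1 (@ratr C) (Hmu k kS); rewrite rmorph_sum rmorph_nat => <-.
by apply: eq_bigr => i _; rewrite rmorphM /= ratr_int.
Qed.

Lemma inR_Pl S j mu : inR (Pl S j mu).
Proof.
apply: inR_list => p /mapP [k]; rewrite mem_filter => /andP [/andP [Hk _] _] ->.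
exact: inR_single.
Qed.

Lemma power_step j (Hj : is_ray T j) (Ss : seq {set 'I_n}) : all (mem T) Ss -> forall m, inM m ->
  exists ms : 'I_d -> elt, exists Y : elt, [/\ (forall i, inM (ms i)), inM Y,
    (forall e, e \in Y -> forall S0, S0 \in T -> in_cone S0 e.2 -> S0 \notin Ss),
    (Ss != [::] -> supp_ok Y) &
    eeq (iter (size Ss) (emul (mono (v j))) m) (eadd (zsum ms) Y)].
Proof.
elim: Ss => [|S Ss IH] /=.
  move=> _ m Hm; exists (fun _ => [::]), m; split => //.
  - by move=> i; exact: inM_zero.
  by move=> w; rewrite coef_eadd coef_zsum big1 ?add0r // => i _; rewrite coef_emul_nilr.
move=> /andP [HS HSs] m Hm.
have [ms' [Y' [Hms' HY' Hinv' _ Heq']]] := IH HSs m Hm.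
have [mu Hmu] := dual_C j HS.
exists (fun i => eadd (emul (mono (v j)) (ms' i)) (escale (mu i) Y')), (emul (Pl S j mu) Y').
split.
- move=> i; apply: inM_add; first exact: inM_mul (inR_ray v C Hj) (Hms' i).
  exact: inM_escale.
- exact: inM_mul (inR_Pl _ _ _) HY'.
- move=> e /mem_emul [a [b [aP bY /asboolP [S2 [HS2 [Ha Hb]]] ->]]] S0 HS0 /= Hab.
  move: aP => /mapP [k]; rewrite mem_filter => /andP [/andP [Hk kS] _] Ea.
  rewrite Ea /= in Ha Hab.
  have Hk0 : in_cone S0 (v k) := cone_split Hind Hint HS2 HS0 Ha Hb Hab.
  have Hb0 : in_cone S0 b.2.
    by apply: (cone_split Hind Hint HS2 HS0 Hb Ha); rewrite addrC.
  rewrite inE negb_or (Hinv' b bY S0 HS0 Hb0) andbT.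
  apply/eqP => E; subst S0.
  move/existsP: Hk => [S' /andP [HS' kS']].
  exact: (ray_notin Hind Hint HS HS' kS' kS Hk0).
- by move=> _; apply: supp_emul.
move=> w /=.
rewrite (emul_eeqr v T _ Heq') coef_emul_catr coef_eadd coef_zsum.
rewrite (emul_eeql v T Y' (xj_split Hj Hmu)) coef_emul_catl.
rewrite /Lz coef_emul_flattenl big_map esum_enum /zsum coef_emul_flattenr big_map esum_enum.
rewrite addrA -big_split /=; congr (_ + _); apply: eq_bigr => i _.
by rewrite coef_emul_catr (emul_swap Hcc) coef_emul_scalel coef_emul_scaler.
Qed.


Hypothesis Tne : exists S, S \in T.

Lemma xj_pow j (Hj : is_ray T j) m : inM m ->
  exists ms : 'I_d -> elt, (forall i, inM (ms i)) /\
    eeq (iter #|T| (emul (mono (v j))) m) (zsum ms).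
Proof.
move=> Hm.
have HT : all (mem T) (enum T) by apply/allP => S; rewrite mem_enum.
have [ms [Y [Hms HY Hinv Hsupp Heq]]] := power_step Hj HT Hm.
have Ene : enum T != [::].
  case: Tne => S HS; apply/eqP => E.
  by move: HS; rewrite -mem_enum E.
have EY : Y = [::].
  case: Y HY Hinv Hsupp Heq => [//|p Y] _ Hinv Hsupp _.
  have pY : p \in p :: Y by rewrite inE eqxx.
  have [S2 [HS2 Hp]] := Hsupp Ene p pY.
  by move: (Hinv p pY S2 HS2 Hp); rewrite mem_enum HS2.
exists ms; split => // w; rewrite cardE Heq EY coef_eadd coef_nil addr0 //.
Qed.

End Mod.

Section Fin.
Variables (d n : nat) (v : 'I_n -> 'rV[int]_d) (T : {set {set 'I_n}}) (C : numFieldType).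
Variable beta : 'rV[int]_d.

Local Notation elt := (elt d C).
Local Notation coef := (@coef d C).
Local Notation emul := (@Defs.emul d n v T C).
Local Notation mono := (@mono d C).
Local Notation escale := (@escale d C).
Local Notation eeq := (@eeq d C).
Local Notation inR := (@inR d n v T C).
Local Notation inM := (@inM d n v T C beta).
Local Notation Zi := (@Zi d n v T C).
Local Notation ratv := (@ratv d).
Local Notation in_coneQ := (in_coneQ v).
Local Notation supp_ok := (@supp_ok d n v T C).

Hypothesis Hind : forall S, S \in T ->
     forall c : 'I_n -> rat, (forall j, j \notin S -> c j = 0) ->
       \sum_j c j *: ratv (v j) = 0 -> forall j, c j = 0.
Hypothesis Hint : forall S S', S \in T -> S' \in T -> forall x,
     in_coneQ S x -> in_coneQ S' x -> in_coneQ (S :&: S') x.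

Let Hcc := cc_assoc Hind Hint.

Definition Bnd : nat := \sum_(i < d) \sum_(j < n) absz (v j ord0 i).
Definition Xc := {ffun 'I_d -> 'I_(Bnd + Bnd).+1}.
Definition dec (c : Xc) : 'rV[int]_d := \row_i ((c i : nat)%:Z - Bnd%:Z).

Lemma box_bound w : in_box v T w -> forall i, (absz (w 0%R i) <= Bnd)%N.
Proof.
move=> [S [HS [q [q01 [qS Eq]]]]] i.
have Ew : ((w 0 i)%:~R : rat) = \sum_j q j * (v j 0 i)%:~R.
  move/matrixP: Eq => /(_ 0 i); rewrite !mxE summxE => ->.
  by apply: eq_bigr => j _; rewrite !mxE.
have H1 : ((absz (w 0%R i))%:R : rat) <= (\sum_j absz (v j ord0 i))%:R.
  rewrite natr_absz intr_norm Ew natr_sum.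
  apply: le_trans (ler_norm_sum _ _ _) _.
  apply: ler_sum => j _; rewrite normrM natr_absz intr_norm.
  have /andP [q0 q1] := q01 j.
  by apply: ler_piMl; rewrite // ger0_norm // ltW.
rewrite ler_nat in H1.
apply: leq_trans H1 _.
by rewrite /Bnd (bigD1 i) //= leq_addr.
Qed.

Lemma box_code w : in_box v T w -> exists c : Xc, dec c = w.
Proof.
move=> Hw.
exists [ffun i => inord (absz (w 0%R i + Bnd%:Z)%R) : 'I_(Bnd + Bnd).+1].
apply/matrixP => i0 i; rewrite (ord1 i0) !mxE ffunE.
have := box_bound Hw i => Hb.
rewrite inordK; lia.
Qed.

Definition genE (w : 'rV[int]_d) (J : {set 'I_n}) : elt :=
  foldr emul (mono w) [seq mono (v j) | j <- enum 'I_n & j \in J].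

Lemma gen_code f : gen v T beta f -> exists c J, f = genE (dec c) J.
Proof.
case=> w [r [Hb [_ [_ ->]]]].
have [c Ec] := box_code Hb.
exists c, [set j | (r j < 0) && is_ray T j && ~~ `[< ray_face v T j w >]].
rewrite Ec /genE; congr foldr; congr map; apply: eq_filter => j.
by rewrite inE.
Qed.

Definition Gen (c : Xc) (J : {set 'I_n}) : elt :=
  if `[< gen v T beta (genE (dec c) J) >] then genE (dec c) J else [::].

Lemma Gen_inM c J : inM (Gen c J).
Proof.
rewrite /Gen; case: asboolP => H; first exact: inM_gen.
exact: inM_zero.
Qed.

Lemma Gen_supp c J : supp_ok (Gen c J).
Proof.
rewrite /Gen; case: (asboolP (gen v T beta (genE (dec c) J))) => H; first exact: (supp_gen H).
by move=> p.
Qed.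

Lemma Gen_gen f : gen v T beta f -> exists c J, Gen c J = f.
Proof.
move=> Hf; have [c [J E]] := gen_code Hf.
exists c, J; rewrite /Gen -E; case: asboolP => //.
Qed.

Definition pws (s : seq 'I_n) (e : 'I_n -> nat) (g : elt) : elt :=
  foldr (fun k acc => if is_ray T k then iter (e k) (emul (mono (v k))) acc else acc) g s.

Lemma iter_inM k j (Hj : is_ray T j) g : inM g -> inM (iter k (emul (mono (v j))) g).
Proof. by move=> Hg; elim: k => //= k IH; apply: inM_mul (inR_ray v C Hj) IH. Qed.

Lemma pws_inM s e g : inM g -> inM (pws s e g).
Proof.
move=> Hg; elim: s => //= k s IH.
by case: ifP => // Hk; apply: iter_inM.
Qed.

Lemma pws_supp s e g : supp_ok g -> supp_ok (pws s e g).
Proof.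
move=> Hg; elim: s => //= k s IH.
case: ifP => // Hk; case: (e k) => //= m; exact: supp_emul.
Qed.

Lemma pws0 s g : pws s (fun _ => 0%N) g = g.
Proof. by elim: s => //= k s ->; case: ifP. Qed.

Lemma iter_eeq k u g g' : eeq g g' -> eeq (iter k (emul u) g) (iter k (emul u) g').
Proof.
move=> E; elim: k => //= k IH w.
by rewrite (emul_eeqr v T _ IH).
Qed.

Lemma iter_comm1 k u u' h :
  eeq (emul u (iter k (emul u') h)) (iter k (emul u') (emul u h)).
Proof.
elim: k => //= k IH w.
by rewrite (emul_swap Hcc) (emul_eeqr v T _ IH).
Qed.

Lemma iter_comm m k u u' h :
  eeq (iter m (emul u) (iter k (emul u') h)) (iter k (emul u') (iter m (emul u) h)).
Proof.
elim: m => //= m IH w.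
by rewrite (emul_eeqr v T _ IH) iter_comm1.
Qed.

Lemma pws_notin s j e e' g : j \notin s -> (forall k, k != j -> e' k = e k) ->
  pws s e' g = pws s e g.
Proof.
move=> js He; elim: s js => //= k s IH.
rewrite inE negb_or => /andP [jk js].
by rewrite IH // He // eq_sym.
Qed.

Lemma pws_shift s j e e' m g : uniq s -> j \in s -> is_ray T j ->
  (forall k, k != j -> e' k = e k) -> e' j = (m + e j)%N ->
  eeq (pws s e' g) (iter m (emul (mono (v j))) (pws s e g)).
Proof.
move=> Us js Hj He Ej; elim: s Us js => //= k s IH /andP [ks Us].
rewrite inE => /orP [/eqP Ekj|js].
  subst k; rewrite (pws_notin g ks He) Hj Ej iterD => w //.
have kj : k != j by apply: contraNneq ks => ->.
case: ifP => Hk w; last exact: IH.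
rewrite He // (iter_eeq _ _ (IH Us js)) iter_comm //.
Qed.

End Fin.

Section Q.
Variables (d n : nat) (v : 'I_n -> 'rV[int]_d) (T : {set {set 'I_n}}) (C : numFieldType).
Variable beta : 'rV[int]_d.

Local Notation elt := (elt d C).
Local Notation coef := (@coef d C).
Local Notation emul := (@Defs.emul d n v T C).
Local Notation mono := (@mono d C).
Local Notation escale := (@escale d C).
Local Notation eeq := (@eeq d C).
Local Notation inR := (@inR d n v T C).
Local Notation inM := (@inM d n v T C beta).
Local Notation Zi := (@Zi d n v T C).
Local Notation ratv := (@ratv d).
Local Notation in_coneQ := (in_coneQ v).
Local Notation Gen := (@Gen d n v T C beta).
Local Notation pws := (@pws d n v T C).
Local Notation zsum := (@zsum d n v T C).

Hypothesis Hind : forall S, S \in T ->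
     forall c : 'I_n -> rat, (forall j, j \notin S -> c j = 0) ->
       \sum_j c j *: ratv (v j) = 0 -> forall j, c j = 0.
Hypothesis Hint : forall S S', S \in T -> S' \in T -> forall x,
     in_coneQ S x -> in_coneQ S' x -> in_coneQ (S :&: S') x.
Hypothesis Hcard : forall S, S \in T -> #|S| = d.
Hypothesis Tne : exists S, S \in T.

Let Hcc := cc_assoc Hind Hint.

Local Notation Xt := {ffun 'I_n -> 'I_#|T|}.
Local Notation X := ({ffun 'I_d -> 'I_(Bnd v + Bnd v).+1} * {set 'I_n} * {ffun 'I_n -> 'I_#|T|})%type.
Definition bX (x : X) : elt := pws (enum 'I_n) (fun k => nat_of_ord (x.2 k)) (Gen x.1.1 x.1.2).
Definition K := #|{: X}|.
Definition b (t : 'I_K) : elt := bX (enum_val t).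

Definition comb (c : 'I_K -> C) (ms : 'I_d -> elt) : elt :=
  flatten ([seq escale (c t) (b t) | t <- enum 'I_K] ++ [seq emul (Zi i) (ms i) | i <- enum 'I_d]).

Lemma coef_comb c ms w : coef (comb c ms) w =
  \sum_t c t * coef (b t) w + \sum_i coef (emul (Zi i) (ms i)) w.
Proof.
rewrite /comb coef_flatten big_cat !big_map; congr (_ + _).
by apply: eq_bigr => t _; rewrite coef_escale.
Qed.

Definition Q (f : elt) := exists c ms, (forall i, inM (ms i)) /\ eeq f (comb c ms).

Lemma Q_ext f g : Q f -> eeq f g -> Q g.
Proof. by move=> [c [ms [H E]]] Efg; exists c, ms; split => // w; rewrite -Efg E. Qed.

Lemma Q_add f g : Q f -> Q g -> Q (eadd f g).
Proof.
move=> [c [ms [H E]]] [c' [ms' [H' E']]].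
exists (fun t => c t + c' t), (fun i => eadd (ms i) (ms' i)); split.
  by move=> i; apply: inM_add.
move=> w; rewrite coef_eadd E E' !coef_comb.
under [X in _ = X + _]eq_bigr do rewrite mulrDl.
under [X in _ = _ + X]eq_bigr do rewrite coef_emul_catr.
by rewrite !big_split /= addrACA.
Qed.

Lemma Q_scale k f : Q f -> Q (escale k f).
Proof.
move=> [c [ms [H E]]].
exists (fun t => k * c t), (fun i => escale k (ms i)); split.
  by move=> i; apply: inM_escale.
move=> w; rewrite coef_escale E !coef_comb mulrDr !big_distrr /=.
congr (_ + _); apply: eq_bigr => i _; first by rewrite mulrA.
by rewrite coef_emul_scaler.
Qed.

Lemma Q_nil : Q [::].
Proof.
exists (fun _ => 0), (fun _ => [::]); split; first by move=> i; exact: inM_zero.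
move=> w; rewrite coef_nil coef_comb !big1 ?addr0 // => i _.
  exact: coef_emul_nilr.
by rewrite mul0r.
Qed.

Lemma Q_b x : Q (bX x).
Proof.
exists (fun t => (t == enum_rank x)%:R), (fun _ => [::]); split; first by move=> i; exact: inM_zero.
move=> w; rewrite coef_comb [X in _ = _ + X]big1 ?addr0; last by move=> i _; exact: coef_emul_nilr.
rewrite (bigD1 (enum_rank x)) //= eqxx mul1r big1 ?addr0.
  by rewrite /b enum_rankK.
by move=> t /negPf ->; rewrite mul0r.
Qed.

Lemma Q_Z i m : inM m -> Q (emul (Zi i) m).
Proof.
move=> Hm.
exists (fun _ => 0), (fun k => if k == i then m else [::]); split.
  by move=> k; case: eqP => _ //; exact: inM_zero.
move=> w; rewrite coef_comb big1 ?add0r; last by move=> t _; rewrite mul0r.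
rewrite (bigD1 i) //= eqxx big1 ?addr0 // => k /negPf ->.
exact: coef_emul_nilr.
Qed.

Lemma Q_zsum ms : (forall i, inM (ms i)) -> Q (zsum ms).
Proof.
move=> Hms; exists (fun _ => 0), ms; split => // w.
rewrite coef_comb coef_zsum [X in _ = X + _]big1 ?add0r // => t _; by rewrite mul0r.
Qed.

Lemma Q_flatten (L : seq elt) : (forall l, l \in L -> Q l) -> Q (flatten L).
Proof.
elim: L => [|l L IH] H /=; first exact: Q_nil.
apply: (@Q_add l (flatten L)); first by apply: H; rewrite inE eqxx.
by apply: IH => l' Hl'; apply: H; rewrite inE Hl' orbT.
Qed.

Lemma Q_red r : inR r -> (forall x, Q (emul r (bX x))) -> forall f, Q f -> Q (emul r f).
Proof.
move=> Hr H f [c [ms [Hms E]]].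
apply: (@Q_ext (flatten ([seq escale (c t) (emul r (b t)) | t <- enum 'I_K] ++
                         [seq emul (Zi i) (emul r (ms i)) | i <- enum 'I_d]))).
  apply: Q_flatten => l; rewrite mem_cat => /orP [/mapP [t _ ->] | /mapP [i _ ->]].
    by apply: Q_scale; exact: H.
  by apply: Q_Z; exact: inM_mul Hr (Hms i).
move=> w; rewrite [RHS](emul_eeqr v T _ E) /comb coef_emul_flattenr coef_flatten !big_cat !big_map /=.
congr (_ + _); apply: eq_bigr => t _.
  by rewrite coef_emul_scaler coef_escale.
by rewrite (emul_swap Hcc).
Qed.

Lemma Q_ray j (Hj : is_ray T j) x : Q (emul (mono (v j)) (bX x)).
Proof.
case: x => [[c J] a]; rewrite /bX /=.
set G := Gen c J.
have Ua : uniq (enum 'I_n) := enum_uniq _.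
have je : j \in enum 'I_n := mem_enum _ _.
case: (ltnP (a j).+1 #|T|) => Ha.
  pose a' : Xt := [ffun k => if k == j then Ordinal Ha else a k].
  apply: (Q_ext (Q_b ((c, J), a'))).
  move=> w; rewrite /bX /= (@pws_shift _ _ _ _ _ Hind Hint _ j (fun k => nat_of_ord (a k)) _ 1 G Ua je Hj) //.
    by move=> k kj; rewrite ffunE (negPf kj).
  by rewrite ffunE eqxx.
have At : (a j).+1 = #|T| by apply/eqP; rewrite eqn_leq Ha ltn_ord.
have T0 : (0 < #|T|)%N by rewrite -At.
pose a0 : Xt := [ffun k => if k == j then Ordinal T0 else a k].
have E1 := @pws_shift _ _ _ _ _ Hind Hint _ j (fun k => nat_of_ord (a0 k)) (fun k => nat_of_ord (a k)) (a j) G Ua je Hj.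
have He : forall k, k != j -> nat_of_ord (a k) = nat_of_ord (a0 k).
  by move=> k kj; rewrite ffunE (negPf kj).
have Ej : nat_of_ord (a j) = (a j + a0 j)%N by rewrite ffunE eqxx addn0.
have {}E1 := E1 He Ej.
have HG : inM (pws (enum 'I_n) (fun k => nat_of_ord (a0 k)) G).
  by apply: pws_inM; apply: Gen_inM.
have [ms [Hms Ems]] := xj_pow Hind Hint Hcard Tne Hj HG.
apply: (Q_ext (Q_zsum Hms)).
move=> w; rewrite [RHS](emul_eeqr v T _ E1).
set Y := pws (enum 'I_n) (fun k => nat_of_ord (a0 k)) G.
have -> : emul (mono (v j)) (iter (a j) (emul (mono (v j))) Y)
   = iter #|T| (emul (mono (v j))) Y := congr1 (fun N => iter N (emul (mono (v j))) Y) At.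
by rewrite Ems.
Qed.

Lemma Q_const c x : Q (emul [:: (c, 0)] (bX x)).
Proof.
apply: (Q_ext (Q_scale c (Q_b x))) => w.
by rewrite (emul_const c (pws_supp (Gen_supp (c := x.1.1) (J := x.1.2)))).
Qed.

Lemma Q_R r : inR r -> forall f, Q f -> Q (emul r f).
Proof.
elim => {r}.
- by move=> c f; apply: Q_red (inR_const v T c) _ f => x; exact: Q_const.
- by move=> j Hj f; apply: Q_red (inR_ray v C Hj) _ f => x; exact: Q_ray.
- move=> f g _ IHf _ IHg h Qh; apply: Q_ext (Q_add (IHf h Qh) (IHg h Qh)) _.
  by move=> w; rewrite coef_eadd coef_emul_catl.
- move=> f g _ IHf _ IHg h Qh; apply: Q_ext (IHf _ (IHg h Qh)) _.
  by move=> w; rewrite (emulA Hcc).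
- by move=> f g _ IHf E h Qh; apply: Q_ext (IHf h Qh) _; apply: emul_eeql.
Qed.

Lemma Q_M f : inM f -> Q f.
Proof.
elim => {f}.
- exact: Q_nil.
- move=> f Hf; have [c [J E]] := Gen_gen Hf.
  have T0 : (0 < #|T|)%N by case: Tne => S HS; apply/card_gt0P; exists S.
  pose a0 : Xt := [ffun _ => Ordinal T0].
  apply: (Q_ext (Q_b ((c, J), a0))) => w.
  rewrite /bX /= -E; congr coef.
  by elim: (enum 'I_n) => //= k s ->; rewrite ffunE /=; case: ifP.
- by move=> f g _ Hf _ Hg; apply: Q_add.
- by move=> r f Hr _ Hf; apply: Q_R.
- by move=> f g _ Hf E; apply: Q_ext Hf E.
Qed.

Lemma main_fd : quotient_finite_dim v T C beta.
Proof.
exists K, b; split.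
  by move=> t; rewrite /b /bX; apply: pws_inM; apply: Gen_inM.
move=> f Hf; have [c [ms [Hms E]]] := Q_M Hf.
by exists c, ms; split.
Qed.

End Q.

Unset Implicit Arguments.
Set Strict Implicit.

Theorem proposition2p16 (R : realType) (d n : nat) (v : 'I_n -> 'rV[int]_d)
    (T : {set {set 'I_n}}) (beta : 'rV[int]_d) :
  good_config v -> regular_triangulation v T ->
  quotient_finite_dim v T R[i] beta.
Proof.
move=> _ [Hfull [Hcov [Hint _]]].
apply: (@main_fd d n v T R[i] beta).
- by move=> S HS; case: (Hfull S HS).
- exact: Hint.
- by move=> S HS; case: (Hfull S HS).
- have H0 : in_coneQ v setT 0.
    exists (fun _ => 0); split => //; split => //.
    by rewrite big1 // => j _; rewrite scale0r.
  by case: (Hcov _ H0) => S [HS _]; exists S.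
Qed.
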